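(* Let $\lambda\in\Lambda^+$ and let $M$ be a $\mathfrak g$-submodule of $\mathcal V(\lambda)$. For $\alpha\in\mathbb N^m$ and $\mu\subseteq[1,n]$ put $M_{\alpha,\mu}=\{v\in L^0(\lambda): x^\alpha y_\mu\otimes v\in M\}$ and $M^\flat=\bigcap_{\alpha,\mu}M_{\alpha,\mu}$. If $M^\flat\neq0$, then $M=\mathcal V(\lambda)$.
   Context: $\mathbb F$ algebraically closed of characteristic $0$, $m,n\ge1$. $\mathcal R=\mathbb F[x_1,\dots,x_m]\otimes\Lambda(y_1,\dots,y_n)$ ($x_i$ even, $y_s$ odd); $x^\alpha=\prod x_i^{\alpha_i}$, $y_\mu=y_{j_1}\cdots y_{j_r}$ for $\mu=\{j_1<\dots<j_r\}$. $\mathfrak g=W(m,n)$ the Lie superalgebra of superderivations of $\mathcal R$, free over $\mathcal R$ on $\partial_i$ (even) and $D_t$ (odd); $\mathfrak g_0\cong\mathfrak{gl}(m|n)$. $L^0(\lambda)$ is the finite-dimensional irreducible $\mathfrak g_0$-module of highest weight $\lambda\in\Lambda^+$ (dominant integral), representation $\xi$. $\mathcal V(\lambda)=\mathcal R\otimes L^0(\lambda)$ with action (homogeneous $f,g$): $f\partial_i.(g\otimes v)=f\partial_i(g)\otimes v+\sum_j\partial_j(f)g\otimes\xi(x_j\partial_i)v+(-1)^{\wp(f)+\wp(g)+1}\sum_jD_j(f)g\otimes\xi(y_j\partial_i)v$, $fD_i.(g\otimes v)=fD_i(g)\otimes v+(-1)^{\wp(g)}\sum_j\partial_j(f)g\otimes\xi(x_jD_i)v+(-1)^{\wp(f)+1}\sum_jD_j(f)g\otimes\xi(y_jD_i)v$.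 *)

(* Defs.v *)
From HB Require Import structures.
From mathcomp Require Import all_boot all_order all_algebra.
From mathcomp Require Import finmap.
From mathcomp Require Import monalg.
Set Implicit Arguments.
Unset Strict Implicit.
Unset Printing Implicit Defensive.
Import GRing.Theory.
Local Open Scope ring_scope.

(* Monomials x^alpha y_mu of R = F[x_1..x_m] (x) Lambda(y_1..y_n):     *)
(* alpha : 'I_m -> nat,  mu : {set 'I_n}  (indices are 0-based).       *)
Definition Mon (m n : nat) := ({ffun 'I_m -> nat} * {set 'I_n})%type.

(* Index set of the variables z_a : a = inl i is x_i (even),
   a = inr s is y_s (odd).  z_a d_b (d = partial_i / D_s) spans g_0.   *)
Definition Idx (m n : nat) := ('I_m + 'I_n)%type.
Definition ipar (m n : nat) (a : Idx m n) : nat :=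
  match a with inl _ => 0 | inr _ => 1 end.

Section Defs.
Variables (F : fieldType) (m n d : nat).

Local Notation Mon := (Mon m n).
Local Notation Idx := (Idx m n).

Definition mpar (k : Mon) : nat := #|k.2|.

(* y_mu * y_nu = ysign mu nu * y_(mu :|: nu) *)
Definition ysign (mu nu : {set 'I_n}) : F :=
  if [disjoint mu & nu]
  then (-1) ^+ #|[set p : 'I_n * 'I_n | [&& p.1 \in mu, p.2 \in nu & (p.2 < p.1)%N]]|
  else 0.

Definition SMon := (F * Mon)%type.

Definition smul (p q : SMon) : SMon :=
  (p.1 * q.1 * ysign p.2.2 q.2.2,
   ([ffun i => p.2.1 i + q.2.1 i], p.2.2 :|: q.2.2)).

Definition sone (k : Mon) : SMon := (1, k).
Definition sscale (c : F) (p : SMon) : SMon := (c * p.1, p.2).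

Definition pder (i : 'I_m) (k : Mon) : SMon :=
  ((k.1 i)%:R, ([ffun j => if j == i then (k.1 j).-1 else k.1 j], k.2)).

(* D_s (x^alpha y_mu): left odd derivative *)
Definition oder (s : 'I_n) (k : Mon) : SMon :=
  (if s \in k.2 then (-1) ^+ #|[set l in k.2 | (l < s)%N]| else 0,
   (k.1, k.2 :\ s)).

(* R (x) L^0 with L^0 = F^d (column vectors) *)
Definition TL := {malg 'cV[F]_d [Mon]}.

(* the element (c x^alpha y_mu) (x) v *)
Definition tm (p : SMon) (v : 'cV[F]_d) : TL := << p.1 *: v *g p.2 >>.

Variable xi : Idx -> Idx -> 'M[F]_d.  (* xi a b = xi(z_a d_b) *)

(* (f partial_i).(g (x) v), f = x^alpha y_mu, g = x^beta y_nu *)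
Definition act_pd (f : Mon) (i : 'I_m) (g : Mon) (v : 'cV[F]_d) : TL :=
  tm (smul (sone f) (pder i g)) v
  + \sum_(j < m) tm (smul (pder j f) (sone g)) (xi (inl j) (inl i) *m v)
  + \sum_(j < n) tm (sscale ((-1) ^+ (mpar f + mpar g + 1))
                      (smul (oder j f) (sone g))) (xi (inr j) (inl i) *m v).

(* (f D_i).(g (x) v) *)
Definition act_od (f : Mon) (i : 'I_n) (g : Mon) (v : 'cV[F]_d) : TL :=
  tm (smul (sone f) (oder i g)) v
  + \sum_(j < m) tm (sscale ((-1) ^+ mpar g) (smul (pder j f) (sone g)))
                    (xi (inl j) (inr i) *m v)
  + \sum_(j < n) tm (sscale ((-1) ^+ (mpar f + 1)) (smul (oder j f) (sone g)))
                    (xi (inr j) (inr i) *m v).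

Definition gact_pd (f : Mon) (i : 'I_m) (u : TL) : TL :=
  \sum_(k <- msupp u) act_pd f i k u@_k.
Definition gact_od (f : Mon) (i : 'I_n) (u : TL) : TL :=
  \sum_(k <- msupp u) act_od f i k u@_k.

Definition tscale (c : F) (u : TL) : TL :=
  \sum_(k <- msupp u) << c *: u@_k *g k >>.

Variable P : 'M[F]_d. (* parity operator of L^0 : +1 on even, -1 on odd part *)

Definition tpar (u : TL) : TL :=
  \sum_(k <- msupp u) << (-1) ^+ mpar k *: (P *m u@_k) *g k >>.

(* (L^0, xi, P) is a finite-dimensional representation of the Lie
   superalgebra g_0 = gl(m|n) (basis z_a d_b, with
   [z_a d_b, z_c d_e] = delta_bc z_a d_e - (-1)^((|a|+|b|)(|c|+|e|)) delta_ea z_c d_b),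
   xi(z_a d_b) having parity |a|+|b| w.r.t. the grading P. *)
Definition is_gl_super_rep : Prop :=
  [/\ P *m P = 1,
      (forall a b, xi a b *m P = (-1) ^+ (ipar a + ipar b) *: (P *m xi a b)) &
      (forall a b c e,
        xi a b *m xi c e
        - (-1) ^+ ((ipar a + ipar b) * (ipar c + ipar e)) *: (xi c e *m xi a b)
        = (b == c)%:R *: xi a e
          - ((-1) ^+ ((ipar a + ipar b) * (ipar c + ipar e)) * (e == a)%:R) *: xi c b)].

Definition is_subspace (V : Type) (zero : V) (add : V -> V -> V)
  (scale : F -> V -> V) (S : V -> Prop) : Prop :=
  [/\ S zero, (forall u w, S u -> S w -> S (add u w)) &
      (forall c u, S u -> S (scale c u))].

Definition is_irreducible : Prop :=
  (0 < d)%N /\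
  forall S : 'cV[F]_d -> Prop,
    is_subspace 0 +%R (fun c v => c *: v) S ->
    (forall v, S v -> S (P *m v)) ->
    (forall a b v, S v -> S (xi a b *m v)) ->
    (forall v, S v -> v = 0) \/ (forall v, S v).

(* graded g-submodule of V(lambda) = R (x) L^0 *)
Definition is_g_submodule (M : TL -> Prop) : Prop :=
  [/\ is_subspace 0 +%R tscale M,
      (forall u, M u -> M (tpar u)),
      (forall f i u, M u -> M (gact_pd f i u)) &
      (forall f i u, M u -> M (gact_od f i u))].

Definition Mcomp (M : TL -> Prop) (k : Mon) (v : 'cV[F]_d) : Prop :=
  M << v *g k >>.

Definition Mflat (M : TL -> Prop) (v : 'cV[F]_d) : Prop :=
  forall k : Mon, Mcomp M k v.

End Defs.

(* Main.v *)
Require Import Defs.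
From HB Require Import structures.
From mathcomp Require Import all_boot all_order all_algebra.
From mathcomp Require Import finmap monalg.
Local Open Scope ring_scope.
Import GRing.Theory.

Section Helpers.
Variables (F : fieldType) (m n d : nat).
Local Notation TL := (TL F m n d).
Local Notation Mon := (Mon m n).

Lemma sumU (h : Mon -> 'cV[F]_d -> TL) (k : Mon) (v : 'cV[F]_d) :
  (forall k', h k' 0 = 0) ->
  \sum_(k' <- msupp << v *g k >>) h k' (<< v *g k >>@_k') = h k v.
Proof.
move=> h0; rewrite msuppU; case: eqP => [->|_].
  by rewrite big_seq_fset0 h0.
by rewrite big_seq_fset1 mcoeffUU.
Qed.

Lemma tm0 (p : SMon F m n) : @tm F m n d p 0 = 0.
Proof. by rewrite /tm scaler0 monalgU0. Qed.

Lemma tmc0 (p : SMon F m n) w : p.1 = 0 -> @tm F m n d p w = 0.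
Proof. by move=> h; rewrite /tm h scale0r monalgU0. Qed.

Lemma tscaleU c (k : Mon) (v : 'cV[F]_d) : tscale c << v *g k >> = << c *: v *g k >>.
Proof.
rewrite /tscale (@sumU (fun k' w => << c *: w *g k' >>)) //.
by move=> k'; rewrite scaler0 monalgU0.
Qed.

Lemma tscaleN1 (u : TL) : tscale (-1) u = - u :> TL.
Proof.
rewrite {2}(monalgE u) /tscale -sumrN; apply: eq_bigr => k _.
by rewrite scaleN1r monalgUN.
Qed.

Definition fx (j : 'I_m) : Mon := ([ffun l => (l == j) : nat], set0).
Definition fy (j : 'I_n) : Mon := ([ffun => 0%N], [set j]).

Lemma signnz (e : nat) : (-1) ^+ e != 0 :> F.
Proof. by rewrite expf_neq0 // oppr_eq0 oner_eq0. Qed.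

Lemma ysign0 (mu : {set 'I_n}) : ysign F set0 mu != 0.
Proof.
rewrite /ysign; have -> : [disjoint set0 & mu] by apply/eq_disjoint0 => x; rewrite inE.
exact: signnz.
Qed.

Lemma sone2 (k : Mon) (p : SMon F m n) : p.2.1 = [ffun => 0%N] -> p.2.2 = set0 ->
  (smul p (sone F k)).2 = k.
Proof.
case: k => a mu /= -> ->; congr pair; last by rewrite set0U.
by apply/ffunP => l; rewrite !ffunE.
Qed.

Lemma pder_fx j (k : Mon) : (smul (pder F j (fx j)) (sone F k)).1 != 0 /\
  (smul (pder F j (fx j)) (sone F k)).2 = k.
Proof.
split; last first.
  apply: sone2 => //=; apply/ffunP => l; rewrite !ffunE; by case: eqP.
rewrite /= ffunE eqxx mulr1 mul1r. exact: ysign0.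
Qed.

Lemma pder_fx_ne j j' (k : Mon) : j' != j -> (smul (pder F j' (fx j)) (sone F k)).1 = 0.
Proof. by move=> ne; rewrite /= ffunE (negbTE ne) !mul0r. Qed.

Lemma oder_fx j j' (k : Mon) : (smul (oder F j' (fx j)) (sone F k)).1 = 0.
Proof. by rewrite /= in_set0 !mul0r. Qed.

Lemma pder_fy j j' (k : Mon) : (smul (pder F j' (fy j)) (sone F k)).1 = 0.
Proof. by rewrite /= ffunE !mul0r. Qed.

Lemma oder_fy_ne j j' (k : Mon) : j' != j -> (smul (oder F j' (fy j)) (sone F k)).1 = 0.
Proof. by move=> ne; rewrite /= in_set1 (negbTE ne) !mul0r. Qed.

Lemma oder_fy j (k : Mon) : (smul (oder F j (fy j)) (sone F k)).1 != 0 /\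
  (smul (oder F j (fy j)) (sone F k)).2 = k.
Proof.
split; last by apply: sone2 => //=; rewrite setDv.
rewrite /= set11 mulr1 mulf_neq0 //; [exact: signnz | rewrite setDv; exact: ysign0].
Qed.

Lemma sscale_nz c (p : SMon F m n) : c != 0 -> p.1 != 0 -> (sscale c p).1 != 0.
Proof. by move=> *; rewrite /= mulf_neq0. Qed.

Lemma sscale_z c (p : SMon F m n) : p.1 = 0 -> (sscale c p).1 = 0.
Proof. by move=> /= ->; rewrite mulr0. Qed.

End Helpers.

Theorem mainTheorem3 (F : closedFieldType) (m n d : nat)
  (xi : Idx m n -> Idx m n -> 'M[F]_d) (P : 'M[F]_d)
  (M : TL F m n d -> Prop) :
  [pchar F] =i pred0 -> (0 < m)%N -> (0 < n)%N ->
  is_gl_super_rep xi P -> is_irreducible xi P ->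
  is_g_submodule xi P M ->
  (exists v : 'cV[F]_d, v != 0 /\ Mflat M v) ->
  forall u : TL F m n d, M u.
Proof.
move=> _ _ _ _ [_ irr] [[M0 MD MZ] Mpar Mpd Mod] [v0 [v0nz fl0]].
have MN : forall a, M a -> M (- a) by move=> a Ha; rewrite -tscaleN1; exact: MZ.
have MB : forall a b, M a -> M b -> M (a - b) by move=> a b Ha Hb; apply: MD => //; exact: MN.
have Munit : forall c k (w : 'cV[F]_d), c != 0 -> M << c *: w *g k >> -> M << w *g k >>.
  move=> c k w cnz H; have := MZ c^-1 _ H.
  by rewrite tscaleU scalerA mulVf // scale1r.
have Mtm : forall v p, Mflat M v -> M (@tm F m n d p v).
  by move=> v p fl; rewrite /tm -tscaleU; apply: MZ; exact: fl.
have ext : forall a b c (p : SMon F m n) w, M (a + b + c) -> M a ->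
    b + c = tm p w -> p.1 != 0 -> M << w *g p.2 >>.
  move=> a b c p w H Ha E nz; apply: (Munit p.1) => //.
  have := MB _ _ H Ha; have -> : a + b + c - a = tm p w by rewrite -E addrC -!addrA addKr.
  done.
set S := Mflat M.
have Ssub : is_subspace (F:=F) 0 +%R (fun c (v : 'cV[F]_d) => c *: v) S.
  split.
  - by move=> k; rewrite /Mcomp monalgU0.
  - by move=> a b Ha Hb k; rewrite /Mcomp monalgUD; apply: MD; [exact: Ha | exact: Hb].
  - by move=> c a Ha k; rewrite /Mcomp -tscaleU; apply: MZ; exact: Ha.
have SP : forall v, S v -> S (P *m v).
  move=> v fl k; have := Mpar _ (fl k).
  rewrite /tpar (@sumU _ _ _ _ (fun k' w => << (-1) ^+ mpar k' *: (P *m w) *g k' >>)).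
    by apply: Munit; exact: signnz.
  by move=> k'; rewrite mulmx0 scaler0 monalgU0.
have Sxi : forall a b v, S v -> S (xi a b *m v).
  move=> a b v fl k.
  have pd0 : forall f i k', act_pd xi f i k' 0 = 0.
    move=> f i k'; rewrite /act_pd tm0 !big1 ?addr0 // => j _; by rewrite mulmx0 tm0.
  have od0 : forall f i k', act_od xi f i k' 0 = 0.
    move=> f i k'; rewrite /act_od tm0 !big1 ?addr0 // => j _; by rewrite mulmx0 tm0.
  case: a => j; case: b => i.
  - have := Mpd (fx m n j) i _ (fl k).
    rewrite /gact_pd (@sumU _ _ _ _ (act_pd xi (fx m n j) i)) // /act_pd => H.
    have [nz e] := pder_fx F m n j k.
    have := ext _ _ _ _ (xi (inl j) (inl i) *m v) H (Mtm _ _ fl) _ nz.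
    rewrite e; apply.
    rewrite (bigD1 j) //= big1 ?addr0; last by move=> j' ne; apply: tmc0; exact: pder_fx_ne.
    rewrite big1 ?addr0 //; move=> j' _; apply: tmc0; apply: sscale_z; exact: oder_fx.
  - have := Mod (fx m n j) i _ (fl k).
    rewrite /gact_od (@sumU _ _ _ _ (act_od xi (fx m n j) i)) // /act_od => H.
    have [nz e] := pder_fx F m n j k.
    have := ext _ _ _ (sscale ((-1) ^+ mpar k) (smul (pder F j (fx m n j)) (sone F k))) (xi (inl j) (inr i) *m v) H (Mtm _ _ fl) _ (@sscale_nz F m n _ _ (signnz _ _) nz).
    rewrite (_ : (sscale _ _).2 = k); last exact: e.
    apply.
    rewrite (bigD1 j) //= big1 ?addr0; last by move=> j' ne; apply: tmc0; apply: sscale_z; exact: pder_fx_ne.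
    rewrite big1 ?addr0 //; move=> j' _; apply: tmc0; apply: sscale_z; exact: oder_fx.
  - have := Mpd (fy m n j) i _ (fl k).
    rewrite /gact_pd (@sumU _ _ _ _ (act_pd xi (fy m n j) i)) // /act_pd => H.
    have [nz e] := oder_fy F m n j k.
    have := ext _ _ _ (sscale ((-1) ^+ (mpar (fy m n j) + mpar k + 1)) (smul (oder F j (fy m n j)) (sone F k))) (xi (inr j) (inl i) *m v) H (Mtm _ _ fl) _ (@sscale_nz F m n _ _ (signnz _ _) nz).
    rewrite (_ : (sscale _ _).2 = k); last exact: e.
    apply.
    rewrite big1 ?add0r; last by move=> j' _; apply: tmc0; exact: pder_fy.
    rewrite (bigD1 j) //= big1 ?addr0 // => j' ne; apply: tmc0; apply: sscale_z; exact: oder_fy_ne.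
  - have := Mod (fy m n j) i _ (fl k).
    rewrite /gact_od (@sumU _ _ _ _ (act_od xi (fy m n j) i)) // /act_od => H.
    have [nz e] := oder_fy F m n j k.
    have := ext _ _ _ (sscale ((-1) ^+ (mpar (fy m n j) + 1)) (smul (oder F j (fy m n j)) (sone F k))) (xi (inr j) (inr i) *m v) H (Mtm _ _ fl) _ (@sscale_nz F m n _ _ (signnz _ _) nz).
    rewrite (_ : (sscale _ _).2 = k); last exact: e.
    apply.
    rewrite big1 ?add0r; last by move=> j' _; apply: tmc0; apply: sscale_z; exact: pder_fy.
    rewrite (bigD1 j) //= big1 ?addr0 // => j' ne; apply: tmc0; apply: sscale_z; exact: oder_fy_ne.
have Sall : forall v, S v.
  case: (irr S Ssub SP Sxi) => // H; by move: v0nz; rewrite (H _ fl0) eqxx.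
move=> u; rewrite (monalgE u).
elim: (msupp u : seq _) => [|k s IH]; first by rewrite big_nil.
rewrite big_cons; apply: MD => //; exact: Sall.
Qed.
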